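(* For every $A \in S(4,\mathbb{R})$ and every $P \in \operatorname{Sp}(4)$, we have $\operatorname{Pf}(P^T A P) = \operatorname{Pf}(A)$ and $\operatorname{s}(P^T A P) = \operatorname{s}(A)$. That is, the Pfaffian and the sum function are invariant under the action $\rho(P,A) = P^T A P$ of $\operatorname{Sp}(4)$ on $S(4,\mathbb{R})$.
   Context: $S(4,\mathbb{R}) = \{A \in M(4,\mathbb{R}) : A^T = -A,\ \det A \neq 0\}$. $J$ is the $4\times 4$ block-diagonal matrix $\operatorname{diag}(J_0,J_0)$ with $J_0 = \begin{bmatrix} 0 & 1 \\ -1 & 0\end{bmatrix}$, and $\operatorname{Sp}(4) = \{P \in M(4,\mathbb{R}) : P^T J P = J\}$. For $A = \begin{bmatrix} 0 & a & b & c \\ -a & 0 & d & e \\ -b & -d & 0 & f \\ -c & -e & -f & 0\end{bmatrix}$, the Pfaffian is $\operatorname{Pf}(A) = af - be + cd$ and the sum function is $\operatorname{s}(A) = a + f$. *)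

(* Defs.v *)
From HB Require Import structures.
From mathcomp Require Import all_boot all_order all_algebra.
From mathcomp Require Import reals.
Set Implicit Arguments. Unset Strict Implicit. Unset Printing Implicit Defensive.
Import Order.TTheory GRing.Theory Num.Theory.
Local Open Scope ring_scope.

(* indices 0..3 of 'I_4 (paper's rows/columns 1..4) *)
Definition i0 : 'I_4 := @Ordinal 4 0 isT.
Definition i1 : 'I_4 := @Ordinal 4 1 isT.
Definition i2 : 'I_4 := @Ordinal 4 2 isT.
Definition i3 : 'I_4 := @Ordinal 4 3 isT.

Definition S4 (R : realType) (A : 'M[R]_4) : Prop :=
  A^T = - A /\ \det A != 0.

(* J0 = [[0,1],[-1,0]] and J = diag(J0, J0) *)
Definition J0 (R : realType) : 'M[R]_2 :=
  \matrix_(i < 2, j < 2)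
    (if (val i == 0%N) && (val j == 1%N) then 1
     else if (val i == 1%N) && (val j == 0%N) then -1 else 0).

Definition J4 (R : realType) : 'M[R]_4 := block_mx (J0 R) 0 0 (J0 R).

Definition Sp4 (R : realType) (P : 'M[R]_4) : Prop :=
  P^T *m J4 R *m P = J4 R.

(* With A = [[0,a,b,c],[-a,0,d,e],[-b,-d,0,f],[-c,-e,-f,0]]:
   a = A 0 1, b = A 0 2, c = A 0 3, d = A 1 2, e = A 1 3, f = A 2 3. *)
Definition Pf (R : realType) (A : 'M[R]_4) : R :=
  A i0 i1 * A i2 i3 - A i0 i2 * A i1 i3 + A i0 i3 * A i1 i2.

Definition sfun (R : realType) (A : 'M[R]_4) : R := A i0 i1 + A i2 i3.

(* Main.v *)
Require Import Defs.
From HB Require Import structures.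
From mathcomp Require Import all_boot all_order all_algebra.
From mathcomp Require Import reals.
From mathcomp Require Import ring lra.
Set Implicit Arguments. Unset Strict Implicit.
Import Order.TTheory GRing.Theory Num.Theory.
Local Open Scope ring_scope.

Definition ent (R : realType) (M : 'M[R]_4) (i j : nat) := M (inord i) (inord j).
Arguments ent {R}.
Lemma ent_E (R : realType) (M : 'M[R]_4) x y : M x y = ent M x y.
Proof. by rewrite /ent !inord_val. Qed.

Lemma skew_ent (R : realType) (A : 'M[R]_4) : A^T = - A ->
  forall i j, ent A j i = - ent A i j.
Proof.
move=> hA i j; rewrite /ent.
by have := congr1 (fun M : 'M[R]_4 => M (inord i) (inord j)) hA; rewrite /= !mxE.
Qed.

Lemma skew_diag (R : realType) (A : 'M[R]_4) : A^T = - A ->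
  forall i, ent A i i = 0.
Proof.
move=> hA i; have h := skew_ent hA i i.
move: h; set x := ent A i i => h; lra.
Qed.

Lemma Pf_congr (R : realType) (A P : 'M[R]_4) : A^T = - A ->
  Pf (P^T *m A *m P) = \det P * Pf A.
Proof.
move=> hA.
do 4 (rewrite !(expand_det_row _ ord0) /cofactor ?big_ord_recl ?big_ord0).
rewrite !det_mx00 /Pf !mxE.
rewrite !big_ord_recl !big_ord0 !mxE !big_ord_recl !big_ord0 !mxE.
rewrite !ent_E /=.
rewrite /bump /= -?plusE /=.

rewrite !(skew_diag hA) !(skew_ent hA 0 1) !(skew_ent hA 0 2) !(skew_ent hA 0 3)
  !(skew_ent hA 1 2) !(skew_ent hA 1 3) !(skew_ent hA 2 3).
ring.
Qed.

Lemma J4E (R : realType) (i j : 'I_4) : J4 R i j =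
  if (val i == 0%N) && (val j == 1%N) then 1
  else if (val i == 1%N) && (val j == 0%N) then -1
  else if (val i == 2%N) && (val j == 3%N) then 1
  else if (val i == 3%N) && (val j == 2%N) then -1 else 0.
Proof.
case: i j => [[|[|[|[|?]]]] Hi] [[|[|[|[|?]]]] Hj] //;
rewrite /J4 /J0 !mxE; case: splitP => k hk; rewrite !mxE; case: splitP => l hl; rewrite ?mxE;
case: k hk => [[|[|?]] ?] //= hk; case: l hl => [[|[|?]] ?] //= hl.
Qed.

Ltac c16 := let Hi := fresh in let Hj := fresh in
  case=> [[|[|[|[|?]]]] Hi] // [[|[|[|[|?]]]] Hj] //.

Lemma J4_skew (R : realType) : (J4 R)^T = - J4 R.
Proof.
apply/matrixP=> i j; rewrite [LHS]mxE [RHS]mxE !J4E; move: i j; c16; rewrite /= ?oppr0 ?opprK //.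
Qed.

Lemma PfJ (R : realType) : Pf (J4 R) = 1.
Proof. rewrite /Pf !J4E /=; ring. Qed.

Lemma JJ (R : realType) : J4 R *m J4 R = - 1%:M.
Proof.
apply/matrixP=> i j; rewrite !mxE !big_ord_recl big_ord0 !J4E /=.
rewrite /bump -?plusE /=.
move: i j; c16; rewrite /=; ring.
Qed.

Lemma tr_skew (R : realType) (B : 'M[R]_4) : B^T = - B ->
  \tr (B *m J4 R) = -2 * sfun B.
Proof.
move=> hB; rewrite /mxtrace /sfun !big_ord_recl big_ord0 !mxE !big_ord_recl big_ord0 !J4E /=.
rewrite /bump -?plusE /=.
rewrite !ent_E /= /bump -?plusE /=.
rewrite !(skew_ent hB 0 1) !(skew_ent hB 2 3).
rewrite !big_ord0.
ring.
Qed.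

Unset Implicit Arguments. Set Strict Implicit.
Theorem theorem2p1 (R : realType) (A P : 'M[R]_4) :
  S4 A -> Sp4 P ->
  Pf (P^T *m A *m P) = Pf A /\ sfun (P^T *m A *m P) = sfun A.
Proof.
move=> [hA _] hP; rewrite /Sp4 in hP.
have hdet : \det P = 1.
  by have := Pf_congr P (J4_skew R); rewrite hP PfJ mulr1 => <-.
split; first by rewrite Pf_congr // hdet mul1r.
have h1 : P^T *m (- (J4 R *m P *m J4 R)) = 1%:M.
  by rewrite mulmxN !mulmxA hP JJ; apply: opprK.
have h2 := mulmx1C h1.
have h3 : P *m J4 R *m P^T = J4 R.
  have := congr1 (mulmx (J4 R)) h2.
  by rewrite mulmx1 mulNmx mulmxN !mulmxA JJ mulNmx mul1mx !mulNmx opprK.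
have sk : (P^T *m A *m P)^T = - (P^T *m A *m P).
  by rewrite !trmx_mul trmxK hA mulNmx mulmxN mulmxA.
have htr : \tr (P^T *m A *m P *m J4 R) = \tr (A *m J4 R).
  by rewrite -!mulmxA mxtrace_mulC -!mulmxA (mulmxA P) h3.
move: htr; rewrite !tr_skew // => htr; lra.
Qed.
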